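(* Let $\Gamma\neq\mathbb N$ be a numerical semigroup that is a complete intersection. Then $\mathrm e(\Gamma)\le \log_2(\mathrm c(\Gamma))+1$.
   Context: A numerical semigroup $\Gamma$ is a submonoid of $(\mathbb N,+)$ with finite complement in $\mathbb N$. It has a unique minimal generating system $\{r_0,\ldots,r_h\}$, whose cardinality is the embedding dimension $\mathrm e(\Gamma)$. The Frobenius number $\mathrm F(\Gamma)$ is the largest integer not in $\Gamma$, and the conductor is $\mathrm c(\Gamma)=\mathrm F(\Gamma)+1$. Let $\varphi:\mathbb N^{h+1}\to\Gamma$, $\varphi(a)=\sum a_ir_i$; a presentation of $\Gamma$ is a generating set of the congruence $\ker\varphi=\{(a,b):\varphi(a)=\varphi(b)\}$, and a minimal presentation is an inclusion-minimal one (its cardinality is always at least $\mathrm e(\Gamma)-1$). $\Gamma$ is a complete intersection if a minimal presentation has cardinality $\mathrm e(\Gamma)-1$. *)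

(* Defs.v *)
From mathcomp Require Import all_boot.
From Stdlib Require Reals.

Set Implicit Arguments.
Unset Strict Implicit.
Unset Printing Implicit Defensive.

Definition numerical_semigroup (S : pred nat) : Prop :=
  [/\ S 0,
      (forall a b, S a -> S b -> S (a + b))
    & exists N, forall n, N <= n -> S n].

Definition vec (k : nat) := {ffun 'I_k -> nat}.
Definition vadd k (a b : vec k) : vec k := [ffun i => a i + b i].

Definition phi k (r : 'I_k -> nat) (a : vec k) : nat := \sum_(i < k) a i * r i.

Definition generates (S : pred nat) k (r : 'I_k -> nat) (P : pred 'I_k) : Prop :=
  forall n, S n <-> exists a : vec k, (forall i, ~~ P i -> a i = 0) /\ n = phi r a.

Definition minimal_generating_system (S : pred nat) k (r : 'I_k -> nat) : Prop :=
  injective r /\ generates S r predT /\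
  forall P : pred 'I_k, generates S r P -> forall i, P i.

Inductive gen_cong k (rho : vec k -> vec k -> Prop) : vec k -> vec k -> Prop :=
| gc_base a b : rho a b -> gen_cong rho a b
| gc_refl a : gen_cong rho a a
| gc_sym a b : gen_cong rho a b -> gen_cong rho b a
| gc_trans a b c : gen_cong rho a b -> gen_cong rho b c -> gen_cong rho a c
| gc_add a b c : gen_cong rho a b -> gen_cong rho (vadd a c) (vadd b c).

Definition presentation k (r : 'I_k -> nat) (rho : vec k -> vec k -> Prop) : Prop :=
  forall a b, gen_cong rho a b <-> phi r a = phi r b.

Definition minimal_presentation k (r : 'I_k -> nat) (rho : seq (vec k * vec k)) : Prop :=
  uniq rho /\ presentation r (fun a b => (a, b) \in rho) /\
  forall sigma : vec k -> vec k -> Prop,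
    (forall a b, sigma a b -> (a, b) \in rho) ->
    presentation r sigma -> forall a b, (a, b) \in rho -> sigma a b.

(* Gamma (with minimal generating system r of size k = e(Gamma)) is a complete
   intersection: a minimal presentation has cardinality e(Gamma) - 1. *)
Definition complete_intersection k (r : 'I_k -> nat) : Prop :=
  exists rho : seq (vec k * vec k), minimal_presentation r rho /\ size rho = k - 1.

Definition frobenius (S : pred nat) (f : nat) : Prop :=
  ~~ S f /\ forall n, f < n -> S n.

(* Main.v *)
Require Import Defs.
From mathcomp Require Import all_boot all_order.
From mathcomp Require Import zify.
From Stdlib Require Import Classical.

Set Implicit Arguments.
Unset Strict Implicit.
Unset Printing Implicit Defensive.

Section Cut.
Variable T : finType.
Local Notation lab := ({set T} * {set T})%type.

Definition touch2 (R : {set T}) (l : lab) := (l.1 :&: R != set0) && (l.2 :&: R != set0).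
Definition inside (A : {set T}) (l : lab) := (l.1 :|: l.2) \subset A.
Definition goodlab (W : {set T}) (l : lab) :=
  [&& l.1 \subset W, l.2 \subset W, l.1 != set0, l.2 != set0 & [disjoint l.1 & l.2]].

Lemma single_side (W : {set T}) v (S : {set T}) :
  S \subset W -> S != set0 -> S :&: (W :\ v) == set0 -> S = [set v].
Proof.
move=> HS Hne /eqP H; apply/eqP; rewrite eqEsubset; apply/andP; split.
  apply/subsetP => x Hx; rewrite inE; apply/negPn/negP => Hxv.
  have : x \in S :&: (W :\ v) by rewrite !inE Hx Hxv (subsetP HS).
  by rewrite H inE.
case/set0Pn: Hne => y Hy; apply/subsetP => x; rewrite inE => /eqP ->.
apply/negPn/negP => Hv.
have : y \in S :&: (W :\ v).
  rewrite !inE Hy (subsetP HS) // andbT; by apply: contraNneq Hv => <-.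
by rewrite H inE.
Qed.

Lemma S2 (W : {set T}) (L : seq lab) :
  1 < #|W| -> size L = #|W|.-1 -> (forall l, l \in L -> goodlab W l) ->
  (forall R : {set T}, R \subset W -> R != set0 -> count (touch2 R) L < #|R|) ->
  exists p q, p != q /\ ([set p], [set q]) \in L.
Proof.
move=> HW HL Hg Hc.
pose P v (l : lab) := (l.1 == [set v]) || (l.2 == [set v]).
have Hex v : v \in W -> has (P v) L.
  move=> Hv.
  have HR : W :\ v != set0.
    by rewrite -card_gt0; move: HW; rewrite (cardsD1 v W) Hv add1n ltnS.
  have Hlt := Hc _ (subD1set W v) HR.
  have Hcard : #|W| = (#|W :\ v|).+1 by rewrite (cardsD1 v W) Hv.
  have : has (predC (touch2 (W :\ v))) L.
    have := count_predC (touch2 (W :\ v)) L.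
    rewrite has_count; lia.
  case/hasP => l Hl /= Hnt; apply/hasP; exists l => //.
  case/and5P: (Hg l Hl) => H1 H2 H3 H4 _.
  move: Hnt; rewrite /touch2 negb_and !negbK => /orP[E|E].
    by rewrite /P (single_side H1 H3 E) eqxx.
  by rewrite /P (single_side H2 H4 E) eqxx orbT.
pose g v := nth (set0, set0) L (find (P v) L).
have HgL v : v \in W -> g v \in L by move=> Hv; rewrite mem_nth // -has_find Hex.
have HgP v : v \in W -> P v (g v) by move=> Hv; apply: nth_find; apply: Hex.
case: (boolP [forall v in W, forall w in W, (g v == g w) ==> (v == w)]) => Hinj.
  have Hu : uniq (map g (enum W)).
    rewrite map_inj_in_uniq ?enum_uniq // => v w; rewrite !mem_enum => Hv Hw E.
    by move/forall_inP: Hinj => /(_ v Hv) /forall_inP /(_ w Hw); rewrite E eqxx => /eqP.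
  have := uniq_leq_size Hu.
  have Hs : {subset map g (enum W) <= L}.
    by move=> l /mapP[v]; rewrite mem_enum => Hv ->; apply: HgL.
  by move/(_ L Hs); rewrite size_map -cardE HL; lia.
move: Hinj; rewrite negb_forall_in => /exists_inP[v Hv].
rewrite negb_forall_in => /exists_inP[w Hw]; rewrite negb_imply => /andP[/eqP E Hvw].
have Pv := HgP v Hv; have Pw := HgP w Hw; rewrite E in Pv.
move: (HgL w Hw); case: (g w) Pv Pw => a b /=; rewrite /P /= => /orP[/eqP->|/eqP->] /orP[/eqP Ew|/eqP Ew].
- by move: Hvw; rewrite -(set1_inj Ew) eqxx.
- by rewrite Ew => H; exists v, w.
- by rewrite Ew => H; exists w, v; rewrite eq_sym.
- by move: Hvw; rewrite -(set1_inj Ew) eqxx.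
Qed.


Lemma im_touch (h : T -> T) (S R' W : {set T}) : S \subset W ->
  (h @: S :&: R' != set0) = (S :&: [set x in W | h x \in R'] != set0).
Proof.
move=> HS; apply/idP/idP => /set0Pn[y].
  rewrite inE => /andP[/imsetP[x Hx ->] Hy]; apply/set0Pn; exists x.
  by rewrite !inE Hx (subsetP HS) // Hy.
rewrite !inE => /andP[Hy /andP[_ Hhy]]; apply/set0Pn; exists (h y).
by rewrite inE Hhy imset_f.
Qed.

Lemma count_ge1 (U : eqType) (a : pred U) (s : seq U) x : x \in s -> a x -> 0 < count a s.
Proof. by move=> Hx Ha; rewrite -has_count; apply/hasP; exists x. Qed.

Lemma CUT n : forall (W : {set T}) (L : seq lab), #|W| = n.+2 -> size L = n.+1 ->
  (forall l, l \in L -> goodlab W l) ->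
  (forall R : {set T}, R \subset W -> R != set0 -> count (touch2 R) L < #|R|) ->
  exists l0 L0, perm_eq L (l0 :: L0) /\ exists A : {set T},
    [/\ A \subset W, A != set0, W :\: A != set0 &
        forall l, l \in L0 -> inside A l \/ inside (W :\: A) l].
Proof.
elim: n => [|n IH] W L HW HL Hg Hc.
  case: L HL Hg Hc => [//|l [|//]] _ Hg Hc.
  exists l, [::]; split => //.
  have : 0 < #|W| by rewrite HW.
  case/card_gt0P => x Hx; exists [set x]; split => //.
  - by rewrite sub1set.
  - by apply/set0Pn; exists x; rewrite inE.
  - by rewrite -card_gt0 cardsD (setIidPr _) ?sub1set // cards1 HW.
have HW1 : 1 < #|W| by rewrite HW.
have HL1 : size L = #|W|.-1 by rewrite HL HW.
have [p [q [Hpq Hl1]]] := S2 HW1 HL1 Hg Hc.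
set l1 := ([set p], [set q]) in Hl1.
have Hgl1 := Hg _ Hl1.
have HpW : p \in W by case/and5P: Hgl1 => /subsetP H _ _ _ _; apply: H; rewrite inE.
have HqW : q \in W by case/and5P: Hgl1 => _ /subsetP H _ _ _; apply: H; rewrite inE.
pose h x := if x == q then p else x.
pose f (l : lab) := (h @: l.1, h @: l.2).
set W' := W :\ q.
set L' := map f (rem l1 L).
have Hperm := perm_to_rem Hl1.
have HcL (a : pred lab) : count a L = a l1 + count a (rem l1 L).
  by move/permP: Hperm => ->.
have hW x : x \in W -> h x \in W'.
  rewrite /h => Hx; case: eqP => [_|/eqP Hxq]; rewrite !inE.
    by rewrite Hpq HpW.
  by rewrite Hxq Hx.
have memL l : l \in rem l1 L -> l \in L by move/mem_rem.
have HW' : #|W'| = n.+2 by move: HW; rewrite (cardsD1 q W) HqW add1n => -[].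
have HL' : size L' = n.+1 by rewrite size_map size_rem // HL.
have Hpq2 : #|[set p; q]| = 2 by rewrite cards2 Hpq.
have Hg' : forall l, l \in L' -> goodlab W' l.
  move=> l' /mapP[l Hl ->]; case/and5P: (Hg _ (memL _ Hl)) => H1 H2 H3 H4 H5.
  apply/and5P; split => /=.
  - by apply/subsetP => y /imsetP[x Hx ->]; apply: hW; apply: (subsetP H1).
  - by apply/subsetP => y /imsetP[x Hx ->]; apply: hW; apply: (subsetP H2).
  - by rewrite imset_eq0.
  - by rewrite imset_eq0.
  rewrite -setI_eq0; apply: contraT => /set0Pn[y]; rewrite inE => /andP[/imsetP[x1 Hx1 ->] /imsetP[x2 Hx2 E]].
  case: (eqVneq x1 x2) => [E12|N12].
    by move: Hx2; rewrite -E12 (disjointFr H5 Hx1).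
  have Ht : touch2 [set p; q] l.
    move: E; rewrite /h; case: eqP => [E1|/eqP N1]; case: eqP => [E2|/eqP N2].
    - by move: N12; rewrite E1 E2 eqxx.
    - move=> E; apply/andP; split; apply/set0Pn.
        by exists x1; rewrite !inE Hx1 E1 eqxx orbT.
      by exists x2; rewrite !inE Hx2 -E eqxx.
    - move=> E; apply/andP; split; apply/set0Pn.
        by exists x1; rewrite !inE Hx1 E eqxx.
      by exists x2; rewrite !inE Hx2 E2 eqxx orbT.
    - by move=> E; move: N12; rewrite E eqxx.
  have Ht1 : touch2 [set p; q] l1.
    apply/andP; split; apply/set0Pn; [exists p | exists q]; by rewrite !inE eqxx ?orbT.
  have HRs : [set p; q] \subset W by rewrite subUset !sub1set HpW HqW.
  have HRn : [set p; q] != set0 by apply/set0Pn; exists p; rewrite !inE eqxx.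
  have := Hc _ HRs HRn; rewrite HcL Ht1 Hpq2 /= add1n !ltnS leqn0 => /eqP H0.
  by have := count_ge1 Hl Ht; rewrite H0.
have Hc' : forall R' : {set T}, R' \subset W' -> R' != set0 -> count (touch2 R') L' < #|R'|.
  move=> R' HR' HR'n.
  set R := [set x in W | h x \in R'].
  have Hcnt : count (touch2 R') L' = count (touch2 R) (rem l1 L).
    rewrite count_map; apply: eq_in_count => l Hl.
    case/and5P: (Hg _ (memL _ Hl)) => H1 H2 _ _ _.
    by rewrite /touch2 /= !(im_touch _ _ H1) !(im_touch _ _ H2).
  have HR'W : R' \subset W by apply: subset_trans HR' (subD1set _ _).
  have HqR' : q \notin R' by apply/negP => /(subsetP HR'); rewrite !inE eqxx.
  have HRsub : R \subset W by apply/subsetP => x; rewrite inE => /andP[].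
  case HpR': (p \in R').
    have ER : R = q |: R'.
      apply/setP => x; rewrite !inE /h; case: eqP => [->|Hxq]; first by rewrite HqW HpR'.
      by apply/andP/idP => [[]//|Hx]; split => //; apply: (subsetP HR'W).
    have HRn : R != set0 by apply/set0Pn; exists q; rewrite ER !inE eqxx.
    have := Hc _ HRsub HRn; rewrite HcL Hcnt ER cardsU1 HqR'.
    have -> : touch2 (q |: R') l1.
      by apply/andP; split; apply/set0Pn; [exists p | exists q]; rewrite !inE eqxx ?HpR' ?orbT.
    by rewrite add1n add1n ltnS.
  have ER : R = R'.
    apply/setP => x; rewrite !inE /h; case: eqP => [->|Hxq]; first by rewrite HqW HpR' (negbTE HqR').
    by apply/andP/idP => [[]//|Hx]; split => //; apply: (subsetP HR'W).
  have HRn : R != set0 by rewrite ER.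
  have := Hc _ HRsub HRn; rewrite HcL Hcnt ER.
  by move=> H; apply: leq_ltn_trans H; apply: leq_addl.
have [l0' [L0' [HP' [A' [HA'W HA'n HA'c HA']]]]] := IH W' L' HW' HL' Hg' Hc'.
have : l0' \in L' by rewrite (perm_mem HP') mem_head.
case/mapP => m0 Hm0 Em0.
have HP2 : perm_eq (map f (rem m0 (rem l1 L))) L0'.
  rewrite -(perm_cons l0'); apply: perm_trans HP'.
  by rewrite Em0 -map_cons; apply: perm_map; rewrite perm_sym perm_to_rem.
exists m0, (l1 :: rem m0 (rem l1 L)); split.
  apply: (perm_trans Hperm).
  apply: (@perm_trans _ (l1 :: m0 :: rem m0 (rem l1 L))).
    by rewrite perm_cons; apply: perm_to_rem.
  by rewrite (perm_catCA [:: l1] [:: m0]).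
set A := [set x in W | h x \in A'].
have hx x : x \in W -> x != q -> h x = x by rewrite /h => _ /negbTE ->.
exists A; split.
- by apply/subsetP => x; rewrite inE => /andP[].
- case/set0Pn: HA'n => y Hy.
  have HyW' : y \in W' := subsetP HA'W y Hy.
  move: HyW'; rewrite !inE => /andP[Hyq HyW].
  by apply/set0Pn; exists y; rewrite !inE HyW hx.
- case/set0Pn: HA'c => y; rewrite !inE => /andP[Hy /andP[Hyq HyW]].
  by apply/set0Pn; exists y; rewrite !inE HyW hx // Hy.
move=> l; rewrite inE => /orP[/eqP ->|Hl].
  have Hhq : h q = p by rewrite /h eqxx.
  have Hhp : h p = p by rewrite hx.
  case HpA': (p \in A').
    left; apply/subsetP => x; rewrite !inE => /orP[] /eqP ->; by rewrite ?HpW ?HqW ?Hhq ?Hhp HpA'.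
  right; apply/subsetP => x; rewrite !inE => /orP[] /eqP ->; by rewrite ?HpW ?HqW ?Hhq ?Hhp HpA'.
have Hl' : l \in rem l1 L by move: Hl; apply: mem_rem.
case/and5P: (Hg _ (memL _ Hl')) => H1 H2 _ _ _.
have HfL : f l \in L0' by rewrite -(perm_mem HP2); apply: map_f.
have Hin x : x \in l.1 :|: l.2 -> h x \in (f l).1 :|: (f l).2.
  by rewrite !inE => /orP[Hx|Hx]; apply/orP; [left|right]; apply: imset_f.
have HxW x : x \in l.1 :|: l.2 -> x \in W.
  by rewrite inE => /orP[/(subsetP H1)|/(subsetP H2)].
case: (HA' _ HfL) => /subsetP Hs; [left|right]; apply/subsetP => x Hx.
  by rewrite inE HxW // Hs // Hin.
have := Hs _ (Hin _ Hx); rewrite !inE => /andP[Hn _].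
by rewrite (negbTE Hn) andbF HxW.
Qed.

End Cut.
Section Frame.
Variable k : nat.
Variable r : 'I_k -> nat.
Local Notation vec := (vec k).

Definition vzero : vec := [ffun => 0].
Definition restr (A : {set 'I_k}) (x : vec) : vec := [ffun i => if i \in A then x i else 0].
Definition unitv (i : 'I_k) (n : nat) : vec := [ffun j => if j == i then n else 0].
Definition vscale (n : nat) (x : vec) : vec := [ffun j => n * x j].
Definition vle (x y : vec) := forall i, x i <= y i.
Definition sfree (S : {set 'I_k}) (x : vec) := forall i, i \in S -> x i = 0.
Definition sfreeb (S : {set 'I_k}) (x : vec) := [forall i in S, x i == 0].
Definition vsupp (A : {set 'I_k}) (x : vec) := forall i, i \notin A -> x i = 0.
Definition cong (rho : seq (vec * vec)) := gen_cong (fun a b => (a,b) \in rho).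

Lemma sfreebP S x : reflect (sfree S x) (sfreeb S x).
Proof.
apply: (iffP forall_inP) => H i Hi; first by apply/eqP; apply: H.
by apply/eqP; apply: H.
Qed.

Lemma phiD a b : phi r (vadd a b) = phi r a + phi r b.
Proof. by rewrite /phi -big_split; apply: eq_bigr => i _; rewrite ffunE mulnDl. Qed.

Lemma phiZ n a : phi r (vscale n a) = n * phi r a.
Proof. by rewrite /phi big_distrr; apply: eq_bigr => i _; rewrite ffunE -mulnA. Qed.

Lemma phi_unit i n : phi r (unitv i n) = n * r i.
Proof.
rewrite /phi (bigD1 i) //= big1 ?addn0; first by rewrite ffunE eqxx.
by move=> j Hj; rewrite ffunE (negbTE Hj).
Qed.

Lemma phi_restr A x : phi r (restr A x) = \sum_(i in A) x i * r i.
Proof.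
rewrite /phi (bigID (mem A)) /= addnC big1 ?add0n.
  by apply: eq_bigr => i Hi; rewrite ffunE Hi.
by move=> i Hi; rewrite ffunE (negbTE Hi).
Qed.

Lemma phi_split A x : phi r x = phi r (restr A x) + phi r (restr (~: A) x).
Proof.
rewrite !phi_restr /phi (bigID (mem A)) /=; congr (_ + _).
by apply: eq_bigl => i; rewrite inE.
Qed.

Lemma vaddC (a b : vec) : vadd a b = vadd b a.
Proof. by apply/ffunP => i; rewrite !ffunE addnC. Qed.

Lemma vadd0 (a : vec) : vadd a vzero = a.
Proof. by apply/ffunP => i; rewrite !ffunE addn0. Qed.

Lemma gen_cong_sub (R1 R2 : vec -> vec -> Prop) :
  (forall a b, R1 a b -> R2 a b) -> forall a b, gen_cong R1 a b -> gen_cong R2 a b.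
Proof.
move=> H a b; elim=> {a b}.
- by move=> a b /H; apply: gc_base.
- by move=> a; apply: gc_refl.
- by move=> a b _ IH; apply: gc_sym.
- by move=> a b c _ IH1 _ IH2; apply: gc_trans IH2.
- by move=> a b c _ IH; apply: gc_add.
Qed.

Section Transfer.
Variable S : {set 'I_k}.
Variable rho : seq (vec * vec).
Definition IS := [seq p <- rho | sfreeb S p.1 && sfreeb S p.2].
Definition US := [seq (if sfreeb S p.1 then p.1 else p.2) | p <- rho & sfreeb S p.1 != sfreeb S p.2].

Lemma congIS_S x y : cong IS x y -> forall i, i \in S -> x i = y i.
Proof.
elim=> {x y}.
- move=> a b; rewrite mem_filter => /andP[/andP[/sfreebP Ha /sfreebP Hb] _] i Hi.
  by rewrite Ha ?Hb.
- by [].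
- by move=> a b _ IH i Hi; rewrite IH.
- by move=> a b c _ IH1 _ IH2 i Hi; rewrite IH1 ?IH2.
- by move=> a b c _ IH i Hi; rewrite !ffunE IH.
Qed.

Definition goodS x := sfree S x /\
  forall x', cong IS x x' -> forall u, u \in US -> ~ vle u x'.

Lemma goodS_cong x y : goodS x -> cong IS x y -> goodS y.
Proof.
move=> [Hs Hu] Hxy; split.
  by move=> i Hi; rewrite -(congIS_S Hxy Hi) Hs.
by move=> x' Hy; apply: Hu; apply: gc_trans Hy.
Qed.

Lemma goodS_add (a c : vec) : goodS (vadd a c) -> goodS a.
Proof.
move=> [Hs Hu]; split.
  by move=> i Hi; have := Hs i Hi; rewrite ffunE; case: (a i).
move=> a' Ha' u Hu' Hle; apply: (Hu (vadd a' c)) Hu' _.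
  by apply: gc_sym; apply: gc_add; apply: gc_sym.
by move=> i; rewrite ffunE; apply: leq_trans (Hle i) (leq_addr _ _).
Qed.

Lemma transfer x y : cong rho x y -> goodS x \/ goodS y -> cong IS x y.
Proof.
elim=> {x y}.
- move=> a b Hab [[Ha Hu]|[Hb Hu]].
  + case Hbb: (sfreeb S b).
      by apply: gc_base; rewrite mem_filter Hab Hbb !andbT; apply/sfreebP.
    exfalso; apply: (Hu a (gc_refl _ _) a) => //.
    apply/mapP; exists (a, b) => /=; last by move/sfreebP: Ha => ->.
    by rewrite mem_filter Hab /= Hbb; move/sfreebP: Ha => ->.
  + case Haa: (sfreeb S a).
      by apply: gc_base; rewrite mem_filter Hab Haa !andbT; apply/sfreebP.
    exfalso; apply: (Hu b (gc_refl _ _) b) => //.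
    apply/mapP; exists (a, b) => /=; last by rewrite Haa.
    by rewrite mem_filter Hab /= Haa; move/sfreebP: Hb => ->.
- by move=> a _; apply: gc_refl.
- by move=> a b _ IH H; apply: gc_sym; apply: IH; case: H; auto.
- move=> a b c _ IH1 _ IH2 [Ga|Gc].
  + have Hab := IH1 (or_introl Ga).
    by apply: gc_trans Hab (IH2 (or_introl (goodS_cong Ga Hab))).
  + have Hbc := IH2 (or_intror Gc).
    have Gb : goodS b by apply: goodS_cong Gc (gc_sym Hbc).
    by apply: gc_trans (IH1 (or_intror Gb)) Hbc.
- move=> a b c _ IH [G|G]; apply: gc_add; apply: IH.
  + by left; apply: goodS_add G.
  + by right; apply: goodS_add G.
Qed.
End Transfer.


Definition esc (I : seq (vec * vec)) (U : seq vec) x :=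
  exists x', cong I x x' /\ exists2 u, u \in U & vle u x'.

Lemma vnz (u : vec) : u != vzero -> exists s, u s != 0.
Proof.
move=> Hu; apply/existsP; apply: contraR Hu => /existsPn H.
by apply/eqP/ffunP => i; rewrite ffunE; move: (H i); rewrite negbK => /eqP.
Qed.

Lemma count_disj (T : eqType) (a b : pred T) (s : seq T) :
  (forall x, a x -> b x -> false) -> count a s + count b s <= size s.
Proof.
move=> H; rewrite -count_predUI.
have -> : count (predI a b) s = 0.
  apply/eqP; rewrite -leqn0 leqNgt -has_count; apply/negP; case/hasP => x _ /andP[Ha Hb].
  by have := H x Ha Hb.
by rewrite addn0 count_size.
Qed.

Lemma KL n : forall (Q : {set 'I_k}) (I : seq (vec * vec)) (U : seq vec), #|Q| = n ->
  (forall p, p \in I -> [/\ vsupp Q p.1, vsupp Q p.2, p.1 != vzero & p.2 != vzero]) ->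
  (forall u, u \in U -> vsupp Q u /\ u != vzero) ->
  (exists N, forall x, vsupp Q x -> esc I U x \/ forall i, x i <= N) ->
  n <= size I + size U.
Proof.
elim: n => [//|n IH] Q I U HQ HI HU [N HN].
case: U HU HN => [|u U0] HU HN.
  have : 0 < #|Q| by rewrite HQ.
  case/card_gt0P => s Hs.
  have Hx : vsupp Q (unitv s N.+1).
    by move=> i Hi; rewrite ffunE; case: eqP => // E; rewrite E Hs in Hi.
  case: (HN _ Hx) => [[x' [_ [w]]] //| Hb].
  by have := Hb s; rewrite ffunE eqxx ltnn.
have [Hsu Hu0] := HU u (mem_head _ _).
have [s Hs] := vnz Hu0.
have HsQ : s \in Q by apply: contraR Hs => /Hsu ->.
set S := [set s].
set I' := IS S I.
set Uc := US S I.
set U' := [seq v <- u :: U0 | sfreeb S v] ++ Uc.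
have HQ' : #|Q :\ s| = n by move: HQ; rewrite (cardsD1 s) HsQ add1n => -[].
have sfS (v : vec) : sfreeb S v -> v s = 0.
  by move/sfreebP => H; apply: H; rewrite inE.
have vsQ' (v : vec) : vsupp Q v -> sfreeb S v -> vsupp (Q :\ s) v.
  move=> Hv /sfS Hvs i; rewrite !inE negb_and negbK.
  by case/orP => [/eqP ->//|]; apply: Hv.
have H1 := IH (Q :\ s) I' U' HQ'.
have H2 : n <= size I' + size U'.
  apply: H1.
  - move=> p; rewrite mem_filter => /andP[/andP[Hp1 Hp2] /HI[? ? ? ?]].
    by split => //; apply: vsQ'.
  - move=> v; rewrite mem_cat => /orP[|].
      rewrite mem_filter => /andP[Hv /HU[? ?]]; split => //; exact: vsQ'.
    case/mapP => p; rewrite mem_filter => /andP[Hx /HI[H1' H2' H3 H4]] ->.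
    case: ifP Hx => Hp1 Hx; split => //; apply: vsQ' => //.
    by move: Hx; case: (sfreeb S p.2).
  - exists N => x Hx.
    have HxQ : vsupp Q x by move=> i Hi; apply: Hx; rewrite !inE negb_and Hi orbT.
    case: (classic (esc I' U' x)) => [|Hne]; first by left.
    right; case: (HN x HxQ) => // -[x' [Hxx' [w Hw Hwx]]].
    have Gx : goodS S I x.
      split.
        by move=> i; rewrite inE => /eqP ->; apply: Hx; rewrite !inE eqxx.
      move=> x'' Hx'' w' Hw' Hle; apply: Hne; exists x''; split => //.
      by exists w' => //; rewrite mem_cat Hw' orbT.
    have Hc := transfer Hxx' (or_introl Gx).
    exfalso; apply: Hne; exists x'; split => //; exists w => //.
    rewrite mem_cat mem_filter Hw andbT; apply/orP; left.
    apply/sfreebP => i; rewrite inE => /eqP ->.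
    have : x' s = 0.
      rewrite -(congIS_S Hc (set11 s)); apply: Hx; by rewrite !inE eqxx.
    by move=> Hx'; move: (Hwx s); rewrite Hx' leqn0 => /eqP.
have Hc1 : size I' + size Uc <= size I.
  rewrite /I' /Uc /IS /US size_map !size_filter; apply: count_disj => p /= /andP[-> ->].
  by [].
have Hc2 : count (sfreeb S) (u :: U0) <= size U0.
  rewrite /= (_ : sfreeb S u = false) ?count_size //.
  by apply/negbTE; apply: contra Hs => /sfS ->.
have Hc3 : count [eta sfreeb S] (u :: U0) <= size U0 := Hc2.
rewrite /=; move: H2; rewrite /U' size_cat size_filter; lia.
Qed.

Lemma count_or (T : eqType) (a b : pred T) (s : seq T) :
  count (fun x => a x && b x) s + count (fun x => a x != b x) s = count (fun x => a x || b x) s.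
Proof.
rewrite -count_predUI.
have -> : count (predI (fun x => a x && b x) (fun x => a x != b x)) s = 0.
  by apply/eqP; rewrite -leqn0 leqNgt -has_count; apply/negP; case/hasP => x _ /=; case: (a x); case: (b x).
by rewrite addn0; apply: eq_count => x /=; case: (a x); case: (b x).
Qed.

Lemma PL (P R : {set 'I_k}) (rho : seq (vec * vec)) (i0 : 'I_k) :
  (forall i, i \in P -> 0 < r i) ->
  (forall p, p \in rho -> [/\ vsupp P p.1, vsupp P p.2, p.1 != vzero & p.2 != vzero]) ->
  (forall x y, vsupp P x -> vsupp P y -> phi r x = phi r y -> cong rho x y) ->
  R \subset P -> i0 \in R ->
  #|P :\: R| <= count (fun p => sfreeb R p.1 || sfreeb R p.2) rho.
Proof.
move=> Hpos Hwf Hcomp HRP Hi0.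
have Hi0P : i0 \in P by apply: (subsetP HRP).
have vsQ (v : vec) : vsupp P v -> sfreeb R v -> vsupp (P :\: R) v.
  move=> Hv /sfreebP Hr i; rewrite !inE negb_and negbK.
  by case/orP => [/Hr|/Hv].
rewrite -count_or.
have -> : count (fun p => sfreeb R p.1 && sfreeb R p.2) rho = size (IS R rho).
  by rewrite size_filter.
have -> : count (fun p => sfreeb R p.1 != sfreeb R p.2) rho = size (US R rho).
  by rewrite size_map size_filter.
apply: (@KL _ (P :\: R)) => //.
- move=> p; rewrite mem_filter => /andP[/andP[H1 H2] /Hwf[? ? ? ?]].
  by split => //; apply: vsQ.
- move=> u; case/mapP => p; rewrite mem_filter => /andP[Hx /Hwf[H1' H2' H3 H4]] ->.
  case: ifP Hx => Hp1 Hx; split => //; apply: vsQ => //.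
  by move: Hx; case: (sfreeb R p.2).
exists (r i0) => x Hx.
case: (classic (esc (IS R rho) (US R rho) x)) => [|Hne]; first by left.
right => i; case: (leqP (x i) (r i0)) => // Hlt; exfalso.
have HiQ : i \in P :\: R by apply: contraLR Hlt => /Hx ->.
have HiP : i \in P by move: HiQ; rewrite inE => /andP[].
have Hii0 : i != i0 by apply: contraTneq HiQ => ->; rewrite inE Hi0.
set z : vec := [ffun j => if j == i then x i - r i0 else x j].
have Ex : x = vadd (unitv i (r i0)) z.
  apply/ffunP => j; rewrite !ffunE; case: eqP => [->|]; last by rewrite add0n.
  by rewrite subnKC // ltnW.
set y := vadd (unitv i0 (r i)) z.
have Hz : vsupp P z.
  move=> j Hj; rewrite ffunE; case: eqP => [E|_]; first by rewrite E HiP in Hj.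
  by apply: Hx; rewrite inE negb_and Hj orbT.
have HxP : vsupp P x by move=> j Hj; apply: Hx; rewrite inE negb_and Hj orbT.
have HyP : vsupp P y.
  move=> j Hj; have := Hz j Hj; rewrite !ffunE => ->; rewrite addn0.
  by case: eqP => // E; rewrite E Hi0P in Hj.
have Hphi : phi r x = phi r y by rewrite Ex /y !phiD !phi_unit mulnC.
have Hc := Hcomp x y HxP HyP Hphi.
have Gx : goodS R rho x.
  split; first by move=> j Hj; apply: Hx; rewrite inE Hj.
  move=> x' Hx' u Hu Hle; apply: Hne; exists x'; split => //; by exists u.
have Hc' := transfer Hc (or_introl Gx).
have := congIS_S Hc' Hi0.
rewrite /y !ffunE eqxx (_ : x i0 = 0); last by apply: Hx; rewrite inE Hi0.
by have := Hpos i HiP; case: (r i).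
Qed.

Definition supp (x : vec) : {set 'I_k} := [set i | x i != 0].
Definition gcdP (P : {set 'I_k}) := \big[gcdn/0]_(i in P) r i.
Definition phiR (B : {set 'I_k}) (x : vec) := phi r (restr B x).
Definition insideV (A : {set 'I_k}) (p : vec * vec) := (supp p.1 :|: supp p.2) \subset A.
Definition wfpair (P : {set 'I_k}) (p : vec * vec) :=
  [/\ vsupp P p.1 /\ vsupp P p.2, p.1 != vzero, p.2 != vzero,
      phi r p.1 = phi r p.2 & forall i, p.1 i = 0 \/ p.2 i = 0].
Definition complete (P : {set 'I_k}) (rho : seq (vec * vec)) :=
  forall x y, vsupp P x -> vsupp P y -> phi r x = phi r y -> cong rho x y.
Definition IRR (P : {set 'I_k}) :=
  forall i, i \in P -> 0 < r i /\ forall x, vsupp (P :\ i) x -> phi r x <> r i.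

Lemma vsuppE (A : {set 'I_k}) (x : vec) : vsupp A x <-> supp x \subset A.
Proof.
split => [H|/subsetP H i Hi]; last by apply/eqP; apply: contraR Hi => Hxi; apply: H; rewrite inE.
by apply/subsetP => i; rewrite inE; apply: contraR => /H ->.
Qed.

Lemma vsupp_sub (A B : {set 'I_k}) (x : vec) : A \subset B -> vsupp A x -> vsupp B x.
Proof. by move=> /subsetP HAB H i Hi; apply: H; apply: contra Hi; apply: HAB. Qed.

Lemma restr_id (A : {set 'I_k}) (x : vec) : vsupp A x -> restr A x = x.
Proof. by move=> H; apply/ffunP => i; rewrite ffunE; case: ifP => // /negbT /H ->. Qed.

Lemma restr_0 (A : {set 'I_k}) (x : vec) : [disjoint A & supp x] -> restr A x = vzero.
Proof.
move=> H; apply/ffunP => i; rewrite !ffunE; case: ifP => // Hi.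
by apply/eqP; move: (disjointFr H Hi); rewrite inE => /negbFE.
Qed.

Lemma sfree_vsupp (P A : {set 'I_k}) (x : vec) : vsupp P x -> sfreeb A x -> vsupp (P :\: A) x.
Proof.
move=> Hv /sfreebP Hr i; rewrite !inE negb_and negbK.
by case/orP => [/Hr|/Hv].
Qed.

Lemma vsupp_sfree (A B : {set 'I_k}) (x : vec) : vsupp A x -> [disjoint A & B] -> sfreeb B x.
Proof.
move=> Hv HAB; apply/sfreebP => i Hi; apply: Hv.
by rewrite (disjointFr (_ : [disjoint B & A]) Hi) // disjoint_sym.
Qed.

Lemma vsupp_nsfree (A : {set 'I_k}) (x : vec) : vsupp A x -> x != vzero -> ~~ sfreeb A x.
Proof.
move=> Hv Hx; apply/negP => /sfreebP Hs; apply/negP: Hx; apply/negPn/eqP/ffunP => i.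
rewrite ffunE; case: (boolP (i \in A)) => [/Hs|/Hv] //.
Qed.

Lemma phi_ge (x : vec) i : x i * r i <= phi r x.
Proof. by rewrite /phi (bigD1 i) //= leq_addr. Qed.

Lemma gcdP_dvd (P : {set 'I_k}) (x : vec) : vsupp P x -> gcdP P %| phi r x.
Proof.
move=> Hx; rewrite /phi; apply: dvdn_sum => i _.
case: (boolP (i \in P)) => Hi; last by rewrite Hx.
by apply: dvdn_mull; apply: (biggcdn_inf i).
Qed.

Lemma gcdP_dvd_r (P : {set 'I_k}) i : i \in P -> gcdP P %| r i.
Proof. by move=> Hi; apply: (biggcdn_inf i). Qed.

Lemma gcdP_gt0 (P : {set 'I_k}) i : i \in P -> 0 < r i -> 0 < gcdP P.
Proof.
move=> Hi Hr; have := gcdP_dvd_r Hi; rewrite lt0n.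
by apply: contraTneq => ->; rewrite dvd0n -lt0n.
Qed.

Lemma mem_rem_neq (T : eqType) (x y : T) s : y != x -> y \in s -> y \in rem x s.
Proof.
move=> Hyx; elim: s => //= z s IH.
case: eqP => [->|_]; first by rewrite inE (negbTE Hyx) /=.
by rewrite !inE => /orP[->|/IH ->]; rewrite ?orbT.
Qed.

Lemma lcm_gcdl (a b c : nat) : lcmn (gcdn a b) c = gcdn (lcmn a c) (lcmn b c).
Proof. exact: (@Order.joinIl _ natdvd a b c). Qed.

Lemma lcm_big (A : {set 'I_k}) (F : 'I_k -> nat) c :
  lcmn (\big[gcdn/0]_(i in A) F i) c = \big[gcdn/0]_(i in A) lcmn (F i) c.
Proof.
elim/big_rec2: _ => [|i x y _ <-]; first by rewrite /lcmn mul0n div0n.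
by rewrite lcm_gcdl.
Qed.

Lemma phi0 : phi r vzero = 0.
Proof. by rewrite /phi big1 // => i _; rewrite ffunE. Qed.

Lemma restrD (A : {set 'I_k}) (a c : vec) : restr A (vadd a c) = vadd (restr A a) (restr A c).
Proof. by apply/ffunP => i; rewrite !ffunE; case: ifP. Qed.

Lemma insideV_supp (A : {set 'I_k}) p : insideV A p -> vsupp A p.1 /\ vsupp A p.2.
Proof. by rewrite /insideV subUset => /andP[H1 H2]; split; apply/vsuppE. Qed.

Lemma restr_disj (A B : {set 'I_k}) (x : vec) : [disjoint A & B] -> vsupp A x -> restr B x = vzero.
Proof.
move=> HAB /vsuppE Hx; apply: restr_0; rewrite disjoint_sym.
exact: disjointWl Hx HAB.
Qed.

Section Glue.
Variables (A B : {set 'I_k}) (rho : seq (vec * vec)) (wA wB : vec).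
Hypothesis HAB : [disjoint A & B].
Hypothesis HwA : vsupp A wA.
Hypothesis HwB : vsupp B wB.
Hypothesis HD : phi r wA = phi r wB.
Hypothesis HD0 : 0 < phi r wA.
Hypothesis Hrho : forall p, p \in rho ->
  [|| insideV A p, insideV B p, p == (wA, wB) | p == (wB, wA)].
Hypothesis Hphi : forall p, p \in rho -> phi r p.1 = phi r p.2.

Definition fA (z : vec) : vec := vadd (restr A z) (vscale (phiR B z %/ phi r wA) wA).

Let HBA : [disjoint B & A]. Proof. by rewrite disjoint_sym. Qed.

Let phiR_A v : vsupp A v -> phiR B v = 0.
Proof. by move=> Hv; rewrite /phiR (restr_disj HAB Hv) phi0. Qed.

Let phiR_B v : vsupp B v -> phiR B v = phi r v.
Proof. by move=> Hv; rewrite /phiR restr_id. Qed.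

Let fA_A v : vsupp A v -> fA v = v.
Proof.
move=> Hv; rewrite /fA phiR_A // div0n restr_id //.
by apply/ffunP => i; rewrite !ffunE mul0n addn0.
Qed.

Let fA_B v : vsupp B v -> fA v = vscale (phi r v %/ phi r wA) wA.
Proof.
move=> Hv; rewrite /fA phiR_B // (restr_disj HBA Hv).
by apply/ffunP => i; rewrite !ffunE add0n.
Qed.

Lemma glue x y : cong rho x y ->
  (phiR B x = phiR B y %[mod phi r wA]) /\ cong [seq p <- rho | insideV A p] (fA x) (fA y).
Proof.
set D := phi r wA.
have fwB : fA wB = wA.
  rewrite fA_B // -HD divnn HD0; apply/ffunP => i; by rewrite !ffunE mul1n.
elim => {x y}.
- move=> a b Hab; move: (Hrho Hab) => /or4P[HA|HB|/eqP E|/eqP E].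
  + have [Ha Hb] := insideV_supp HA.
    rewrite !phiR_A // !fA_A //; split => //.
    by apply: gc_base; rewrite mem_filter HA.
  + have [Ha Hb] := insideV_supp HB.
    have Hab' : phi r a = phi r b := Hphi Hab.
    by rewrite (phiR_B Ha) (phiR_B Hb) (fA_B Ha) (fA_B Hb) Hab'; split => //; apply: gc_refl.
  + case: E => -> ->; rewrite (phiR_A HwA) (phiR_B HwB) (fA_A HwA) fwB -HD modnn mod0n.
    by split => //; apply: gc_refl.
  + case: E => -> ->; rewrite (phiR_A HwA) (phiR_B HwB) (fA_A HwA) fwB -HD modnn mod0n.
    by split => //; apply: gc_refl.
- by move=> a; split => //; apply: gc_refl.
- by move=> a b _ [IH1 IH2]; split; [rewrite IH1|apply: gc_sym].
- move=> a b c _ [IH1 IH2] _ [IH3 IH4]; split; first by rewrite IH1.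
  by apply: gc_trans IH4.
- move=> a b c _ [IH1 IH2].
  have Hsplit z : phiR B (vadd z c) = phiR B z + phiR B c by rewrite /phiR restrD phiD.
  have Hdiv z : (phiR B z + phiR B c) %/ D = phiR B z %/ D + (phiR B z %% D + phiR B c) %/ D.
    by rewrite {1}(divn_eq (phiR B z) D) -addnA divnMDl.
  have Hf z : fA (vadd z c) = vadd (fA z) (vadd (restr A c) (vscale ((phiR B z %% D + phiR B c) %/ D) wA)).
    apply/ffunP => i; rewrite /fA -/D Hsplit Hdiv !ffunE mulnDl.
    by case: ifP => _; rewrite ?addn0 ?add0n; lia.
  split; first by rewrite !Hsplit -modnDml IH1 modnDml.
  by rewrite !Hf IH1; apply: gc_add.
Qed.
End Glue.

Lemma fA_id (A B : {set 'I_k}) (wA x : vec) : [disjoint A & B] -> vsupp A x -> fA A B wA x = x.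
Proof.
move=> HAB Hx; rewrite /fA /phiR (restr_disj HAB Hx) phi0 div0n restr_id //.
by apply/ffunP => i; rewrite !ffunE mul0n addn0.
Qed.

Lemma touchE (R : {set 'I_k}) (x : vec) : (supp x :&: R != set0) = ~~ sfreeb R x.
Proof.
apply/idP/idP.
  case/set0Pn => i; rewrite !inE => /andP[Hx Hi]; apply/negP => /sfreebP H.
  by move: Hx; rewrite H.
move=> Hn; apply/negP => /eqP H; move/negP: Hn; apply; apply/sfreebP => i Hi.
apply/eqP; apply: contraT => Hx.
have : i \in supp x :&: R by rewrite !inE Hx.
by rewrite H inE.
Qed.

Lemma supp_nz (x : vec) : x != vzero -> supp x != set0.
Proof. by case/vnz => s Hs; apply/set0Pn; exists s; rewrite inE. Qed.

Lemma MAIN0 (P : {set 'I_k}) : #|P| = 1 -> forall i, i \in P -> gcdP P <= r i.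
Proof.
move/eqP/cards1P => [x ->] i; rewrite inE => /eqP ->.
by rewrite /gcdP big_set1.
Qed.

Lemma count_perm_rem (T : eqType) (a : pred T) (x : T) (s : seq T) :
  x \in s -> count a s = a x + count a (rem x s).
Proof. by move=> Hx; move/permP: (perm_to_rem Hx) => ->. Qed.

Lemma disjD (P A : {set 'I_k}) : [disjoint A & P :\: A].
Proof.
rewrite -setI_eq0; apply/eqP/setP => i; rewrite !inE.
by case: (i \in A); rewrite ?andbF.
Qed.

Lemma mass2 (P X : {set 'I_k}) (w w' : vec) c :
  IRR P -> X \subset P -> vsupp X w -> w != vzero -> vsupp (P :\: X) w' -> phi r w = phi r w' ->
  (forall j, j \in X -> c <= r j) -> 2 * c <= phi r w.
Proof.
move=> Hirr HXP Hw Hnz Hw' Heq Hc.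
case/vnz: Hnz => j Hj.
have HjX : j \in X by apply: contraR Hj => /Hw ->.
set z : vec := [ffun t => if t == j then (w j).-1 else w t].
have Ew : w = vadd (unitv j 1) z.
  apply/ffunP => t; rewrite !ffunE; case: eqP => [->|_]; last by rewrite add0n.
  by rewrite add1n prednK // lt0n.
have Hz : vsupp X z.
  move=> t Ht; rewrite ffunE; case: eqP => [E|_]; first by rewrite E HjX in Ht.
  exact: Hw.
case: (eqVneq z vzero) => [Z|Znz].
  exfalso; have Hjp : j \in P := subsetP HXP j HjX.
  case: (Hirr j Hjp) => _ H; apply: (H w').
  - apply: vsupp_sub Hw'; apply/subsetP => t; rewrite !inE => /andP[Ht HtP].
    by rewrite HtP andbT; apply: contraNneq Ht => ->.
  - by rewrite -Heq Ew Z vadd0 phi_unit mul1n.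
case/vnz: Znz => t Ht.
have HtX : t \in X by apply: contraR Ht => /Hz ->.
rewrite Ew phiD phi_unit mul1n mul2n -addnn leq_add ?Hc //.
apply: leq_trans (phi_ge z t); apply: leq_trans (Hc t HtX) _.
by rewrite leq_pmull // lt0n.
Qed.

Lemma arith1 (a b : bool) (nA nB cA cB n : nat) :
  nB <= a + cB -> nA <= b + cA -> cA + cB = n -> nA + nB = n.+2 ->
  [/\ a, b, nA = cA.+1 & nB = cB.+1].
Proof. case: a; case: b => /= H1 H2 H3 H4; first (by split => //; lia); exfalso; lia. Qed.

Lemma MAIN m : forall n, n <= m -> forall (P : {set 'I_k}) (rho : seq (vec * vec)),
  #|P| = n.+1 -> IRR P -> (forall p, p \in rho -> wfpair P p) -> complete P rho ->
  size rho <= n -> forall i, i \in P -> 2 ^ n * gcdP P <= r i.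
Proof.
elim: m => [|m IHm] n Hn P rho HP Hirr Hwf Hcomp Hsz.
  by move: Hn; rewrite leqn0 => /eqP Hn; subst n; rewrite expn0 mul1n; apply: MAIN0.
case: n Hn HP Hsz => [|n] Hn HP Hsz.
  by rewrite expn0 mul1n; apply: MAIN0.
have Hpos : forall i, i \in P -> 0 < r i by move=> i /Hirr[].
have Hwf' : forall p, p \in rho -> [/\ vsupp P p.1, vsupp P p.2, p.1 != vzero & p.2 != vzero].
  by move=> p /Hwf[[? ?] ? ? _ _].
have HPL := fun R i0 => @PL P R rho i0 Hpos Hwf' Hcomp.
have : 0 < #|P| by rewrite HP.
case/card_gt0P => i0 Hi0.
have Hsz' : size rho = n.+1.
  have := HPL [set i0] i0; rewrite sub1set Hi0 inE eqxx => /(_ isT isT).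
  have -> : #|P :\: [set i0]| = n.+1 by move: HP; rewrite (cardsD1 i0) Hi0 => -[].
  move=> H; apply/eqP; rewrite eqn_leq Hsz /=; apply: leq_trans H (count_size _ _).
pose lab (p : vec * vec) := (supp p.1, supp p.2).
have Hg : forall l, l \in map lab rho -> goodlab P l.
  move=> l /mapP[p Hp ->]; case: (Hwf p Hp) => [[H1 H2] H3 H4 _ H6].
  apply/and5P; split => /=; try (by apply/vsuppE); try (by apply: supp_nz).
  rewrite -setI_eq0; apply/eqP/setP => j; rewrite !inE.
  by case: (H6 j) => ->; rewrite ?eqxx ?andbF.
have Hc3 : forall R : {set 'I_k}, R \subset P -> R != set0 -> count (touch2 R) (map lab rho) < #|R|.
  move=> R HRP /set0Pn[j Hj].
  have := HPL R j HRP Hj.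
  rewrite count_map.
  have -> : count (preim lab (touch2 R)) rho = count (predC (fun p => sfreeb R p.1 || sfreeb R p.2)) rho.
    by apply: eq_count => p; rewrite /= /touch2 /= !touchE negb_or.
  have := count_predC (fun p => sfreeb R p.1 || sfreeb R p.2) rho.
  rewrite cardsD (setIidPr HRP) HP Hsz'.
  have : #|R| <= n.+2 by rewrite -HP; apply: subset_leq_card.
  have : 0 < #|R| by apply/card_gt0P; exists j.
  lia.
have HL : size (map lab rho) = n.+1 by rewrite size_map Hsz'.
have [l0 [L0 [HpL [A [HAP HAn HBn Hins]]]]] := @CUT _ n P (map lab rho) HP HL Hg Hc3.
set B := P :\: A.
have : l0 \in map lab rho by rewrite (perm_mem HpL) mem_head.
case/mapP => p0 Hp0 El0.
have HpR : perm_eq (map lab (rem p0 rho)) L0.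
  rewrite -(perm_cons l0); apply: perm_trans HpL.
  by rewrite El0 -map_cons; apply: perm_map; rewrite perm_sym perm_to_rem.
have Hrem : forall p, p \in rem p0 rho -> insideV A p \/ insideV B p.
  move=> p Hp; have : lab p \in L0 by rewrite -(perm_mem HpR); exact: map_f.
  by move/Hins => H; exact H.
have Hcases : forall p, p \in rho -> p = p0 \/ p \in rem p0 rho.
  move=> p Hp; case: (eqVneq p p0) => [->|Hne]; [by left | by right; apply: mem_rem_neq].
have HAB : [disjoint A & B] := disjD P A.
have HBP : B \subset P := subsetDl P A.
have Hcard : #|P| = #|A| + #|B| by rewrite -(cardsID A P) (setIidPr HAP).
have insAB p : p \in rho -> insideV A p -> insideV B p -> False.
  move=> Hp HA HB; case: (Hwf p Hp) => [[_ _] Hnz _ _ _].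
  have [Ha _] := insideV_supp HA; have [Hb _] := insideV_supp HB.
  case/vnz: Hnz => j Hj.
  have HjA : j \in A by apply: contraR Hj => /Ha ->.
  have HjB : j \in B by apply: contraR Hj => /Hb ->.
  by move: (disjointFr HAB HjA); rewrite HjB.
have orX (X Y : {set 'I_k}) p : p \in rho -> [disjoint Y & X] ->
   (insideV X p -> (sfreeb X p.1 || sfreeb X p.2) = false) /\
   (insideV Y p -> sfreeb X p.1 || sfreeb X p.2).
  move=> Hp HYX; case: (Hwf p Hp) => [_ H1 H2 _ _]; split.
    move=> HX; have [Ha Hb] := insideV_supp HX.
    by rewrite (negbTE (vsupp_nsfree Ha H1)) (negbTE (vsupp_nsfree Hb H2)).
  by move=> HY; have [Ha _] := insideV_supp HY; rewrite (vsupp_sfree Ha).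
have HBA : [disjoint B & A] by rewrite disjoint_sym.
have HcntA : count (fun p => sfreeb A p.1 || sfreeb A p.2) (rem p0 rho) = count (insideV B) (rem p0 rho).
  apply: eq_in_count => p Hp; have Hp' := mem_rem Hp.
  have [F1 F2] := orX A B p Hp' HBA.
  case: (Hrem p Hp) => H.
  - rewrite (F1 H); symmetry; apply/negP => HB; exact: insAB Hp' H HB.
  - by rewrite H (F2 H).
have HcntB : count (fun p => sfreeb B p.1 || sfreeb B p.2) (rem p0 rho) = count (insideV A) (rem p0 rho).
  apply: eq_in_count => p Hp; have Hp' := mem_rem Hp.
  have [F1 F2] := orX B A p Hp' HAB.
  case: (Hrem p Hp) => H.
  - by rewrite H (F2 H).
  - rewrite (F1 H); symmetry; apply/negP => HA; exact: insAB Hp' HA H.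
have Hsum : count (insideV A) (rem p0 rho) + count (insideV B) (rem p0 rho) = n.
  rewrite -count_predUI.
  have -> : count (predI (insideV A) (insideV B)) (rem p0 rho) = 0.
    rewrite (@eq_in_count _ _ pred0); first by rewrite count_pred0.
    move=> p Hp /=; apply/negP => /andP[H1 H2]; exact: insAB (mem_rem Hp) H1 H2.
  rewrite (@eq_in_count _ _ predT); first by rewrite count_predT size_rem // Hsz' addn0.
  by move=> p Hp /=; case: (Hrem p Hp) => ->; rewrite ?orbT.
have [iA HiA] := set0Pn _ HAn.
have [iB HiB] := set0Pn _ HBn.
have PLA := HPL A iA HAP HiA.
have PLB := HPL B iB HBP HiB.
rewrite (count_perm_rem _ Hp0) HcntA in PLA.
rewrite (count_perm_rem _ Hp0) HcntB in PLB.
have HcB : #|P :\: B| = #|A| by rewrite cardsD (setIidPr HBP) Hcard addnK.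
rewrite HcB in PLB.
move: PLA PLB.
set oA := (sfreeb A p0.1 || sfreeb A p0.2).
set oB := (sfreeb B p0.1 || sfreeb B p0.2).
set cA := count (insideV A) (rem p0 rho).
set cB := count (insideV B) (rem p0 rho).
move=> PLA PLB.
have [HoA HoB ScA ScB] : [/\ oA, oB, #|A| = cA.+1 & #|B| = cB.+1].
  apply: (arith1 PLA PLB Hsum); by rewrite -Hcard HP.
have PBA : P :\: B \subset A.
  apply/subsetP => x; rewrite !inE => /andP[Hx HxP]; move: Hx; rewrite HxP andbT negbK.
  by [].
have Ep0 : p0 = (p0.1, p0.2) by case: p0 {Hp0 El0 HpR Hrem Hcases PLA PLB oA oB cA cB HoA HoB ScA ScB Hsum HcntA HcntB}.
case: (Hwf p0 Hp0) => [[Hp01 Hp02] Hnz1 Hnz2 Hphi0 _].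
have [wA [wB [HwA HwB [HwAnz HwBnz] HD Hor]]] : exists wA wB,
  [/\ vsupp A wA, vsupp B wB, wA != vzero /\ wB != vzero, phi r wA = phi r wB &
      (p0 == (wA, wB)) || (p0 == (wB, wA))].
  move: HoA HoB; rewrite /oA /oB; case Ha: (sfreeb A p0.1) => /= HoA HoB.
  - have Ha' : vsupp B p0.1 := sfree_vsupp Hp01 Ha.
    have Hnb : ~~ sfreeb B p0.1 := vsupp_nsfree Ha' Hnz1.
    move: HoB; rewrite (negbTE Hnb) /= => Hb.
    have Hb' : vsupp A p0.2 := vsupp_sub PBA (sfree_vsupp Hp02 Hb).
    by exists p0.2, p0.1; split => //; rewrite -Ep0 eqxx orbT.
  - have Hb' : vsupp B p0.2 := sfree_vsupp Hp02 HoA.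
    have Hnb := vsupp_nsfree Hb' Hnz2; move: HoB; rewrite (negbTE Hnb) orbF => Ha2.
    have Ha' : vsupp A p0.1 := vsupp_sub PBA (sfree_vsupp Hp01 Ha2).
    by exists p0.1, p0.2; split => //; rewrite -Ep0 eqxx.
have Dpos (X : {set 'I_k}) (w : vec) : X \subset P -> vsupp X w -> w != vzero -> 0 < phi r w.
  move=> HXP Hw /vnz[j Hj]; have HjX : j \in X by apply: contraR Hj => /Hw ->.
  apply: leq_trans (phi_ge w j); rewrite muln_gt0 lt0n Hj /=; apply: Hpos; exact: (subsetP HXP).
have HD0A : 0 < phi r wA := Dpos A wA HAP HwA HwAnz.
have HD0B : 0 < phi r wB := Dpos B wB HBP HwB HwBnz.
have HrhoA : forall p, p \in rho -> [|| insideV A p, insideV B p, p == (wA, wB) | p == (wB, wA)].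
  move=> p Hp; case: (Hcases p Hp) => [E|Hr].
    rewrite E; by case/orP: Hor => /eqP ->; rewrite eqxx ?orbT.
  by case: (Hrem p Hr) => ->; rewrite ?orbT.
have HrhoB : forall p, p \in rho -> [|| insideV B p, insideV A p, p == (wB, wA) | p == (wA, wB)].
  by move=> p /HrhoA /or4P[]->; rewrite ?orbT.
have Hphi : forall p, p \in rho -> phi r p.1 = phi r p.2 by move=> p /Hwf[].
have GA := glue HAB HwA HwB HD HD0A HrhoA Hphi.
have GB := glue HBA HwB HwA (esym HD) HD0B HrhoB Hphi.
have sub_comp (X Y : {set 'I_k}) (wX : vec) :
  [disjoint X & Y] -> X \subset P ->
  (forall x y, cong rho x y -> cong [seq p <- rho | insideV X p] (fA X Y wX x) (fA X Y wX y)) ->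
  complete X [seq p <- rho | insideV X p].
  move=> HXY HXP G x y Hx Hy Hxy.
  have := G x y (Hcomp x y (vsupp_sub HXP Hx) (vsupp_sub HXP Hy) Hxy).
  by rewrite !fA_id.
have HcompA := sub_comp A B wA HAB HAP (fun x y H => (GA x y H).2).
have HcompB := sub_comp B A wB HBA HBP (fun x y H => (GB x y H).2).
have sub_irr (X : {set 'I_k}) : X \subset P -> IRR X.
  move=> HXP j Hj; have HjP := subsetP HXP j Hj; case: (Hirr j HjP) => H1 H2; split => // x Hx.
  by apply: H2; apply: vsupp_sub Hx; apply: setSD.
have sub_wf (X : {set 'I_k}) : forall p, p \in [seq p <- rho | insideV X p] -> wfpair X p.
  move=> p; rewrite mem_filter => /andP[HX Hp]; case: (Hwf p Hp) => _ H2 H3 H4 H5.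
  by have [Ha Hb] := insideV_supp HX; split.
have Hp0A : insideV A p0 = false.
  by apply/negP => H; have := (orX A B p0 Hp0 HBA).1 H; rewrite -/oA HoA.
have Hp0B : insideV B p0 = false.
  by apply/negP => H; have := (orX B A p0 Hp0 HAB).1 H; rewrite -/oB HoB.
have szA : size [seq p <- rho | insideV A p] = cA by rewrite size_filter (count_perm_rem _ Hp0) Hp0A.
have szB : size [seq p <- rho | insideV B p] = cB by rewrite size_filter (count_perm_rem _ Hp0) Hp0B.
have Hnm : n <= m by rewrite -ltnS.
have HcAm : cA <= m by apply: leq_trans Hnm; rewrite -Hsum leq_addr.
have HcBm : cB <= m by apply: leq_trans Hnm; rewrite -Hsum leq_addl.
have IHA := IHm cA HcAm A _ ScA (sub_irr A HAP) (sub_wf A) HcompA (eq_leq szA).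
have IHB := IHm cB HcBm B _ ScB (sub_irr B HBP) (sub_wf B) HcompB (eq_leq szB).
set gA := gcdP A.
set gB := gcdP B.
have gA0 : 0 < gA := gcdP_gt0 HiA (Hpos iA (subsetP HAP iA HiA)).
have gB0 : 0 < gB := gcdP_gt0 HiB (Hpos iB (subsetP HBP iB HiB)).
set D := phi r wA.
have Hlcm : forall i j, i \in A -> j \in B -> D %| lcmn (r i) (r j).
  move=> i j Hi Hj.
  set l := lcmn (r i) (r j).
  set x := unitv i (l %/ r i).
  set y := unitv j (l %/ r j).
  have Hx : vsupp A x by move=> t Ht; rewrite ffunE; case: eqP => // E; rewrite E Hi in Ht.
  have Hy : vsupp B y by move=> t Ht; rewrite ffunE; case: eqP => // E; rewrite E Hj in Ht.
  have Hxy : phi r x = phi r y by rewrite /x /y !phi_unit !divnK ?dvdn_lcml ?dvdn_lcmr.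
  have := (GA x y (Hcomp x y (vsupp_sub HAP Hx) (vsupp_sub HBP Hy) Hxy)).1.
  rewrite /phiR (restr_disj HAB Hx) phi0 (restr_id Hy) -Hxy /x phi_unit divnK ?dvdn_lcml // mod0n.
  by move/esym/eqP.
have HDl : D %| lcmn gA gB.
  rewrite /gA /gcdP lcm_big; apply/dvdn_biggcdP => i Hi.
  rewrite lcmnC /gB /gcdP lcm_big; apply/dvdn_biggcdP => j Hj.
  by rewrite lcmnC; apply: Hlcm.
have AsubPB : A \subset P :\: B.
  apply/subsetP => x Hx; rewrite !inE Hx (subsetP HAP x Hx) /=; by [].
have HmB : 2 * (2 ^ cB * gB) <= D.
  rewrite /D HD; apply: (mass2 Hirr HBP HwB HwBnz (vsupp_sub AsubPB HwA) (esym HD)).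
  exact: IHB.
have HmA : 2 * (2 ^ cA * gA) <= D := mass2 Hirr HAP HwA HwAnz HwB HD IHA.
have HgP : gcdP P = gcdn gA gB.
  rewrite /gA /gB /gcdP -bigU //; apply: eq_bigl => j; rewrite !inE.
  by case: (boolP (j \in A)) => HjA /=; rewrite ?(subsetP HAP j HjA).
have Hlpos : 0 < lcmn gA gB by rewrite lcmn_gt0 gA0 gB0.
have HDle : D <= lcmn gA gB := dvdn_leq Hlpos HDl.
have Hprod : lcmn gA gB * gcdn gA gB = gA * gB := muln_lcm_gcd gA gB.
have Hg0 : 0 < gcdn gA gB by rewrite gcdn_gt0 gA0.
have HgA : 2 ^ cB.+1 * gcdn gA gB <= gA.
  rewrite -(leq_pmul2r gB0); apply: (@leq_trans (lcmn gA gB * gcdn gA gB)); last by rewrite Hprod.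
  rewrite mulnAC leq_pmul2r // expnS -mulnA.
  exact: leq_trans HmB HDle.
have HgB : 2 ^ cA.+1 * gcdn gA gB <= gB.
  rewrite -(leq_pmul2r gA0); apply: (@leq_trans (lcmn gA gB * gcdn gA gB)); last by rewrite Hprod mulnC.
  rewrite mulnAC leq_pmul2r // expnS -mulnA.
  exact: leq_trans HmA HDle.
move=> i Hi; rewrite HgP.
case: (boolP (i \in A)) => HiA'.
  have En : n.+1 = cA + cB.+1 by rewrite addnS Hsum.
  rewrite En expnD -mulnA; apply: leq_trans (IHA i HiA'); by rewrite leq_mul2l HgA orbT.
have HiB' : i \in B by rewrite inE HiA' Hi.
have En : n.+1 = cB + cA.+1 by rewrite addnS addnC Hsum.
rewrite En expnD -mulnA; apply: leq_trans (IHB i HiB'); by rewrite leq_mul2l HgB orbT.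
Qed.

Lemma gen_cong_sub2 (R1 R2 : vec -> vec -> Prop) :
  (forall a b, R1 a b -> gen_cong R2 a b) -> forall a b, gen_cong R1 a b -> gen_cong R2 a b.
Proof.
move=> H a b; elim=> {a b}.
- by move=> a b /H.
- by move=> a; apply: gc_refl.
- by move=> a b _ IH; apply: gc_sym.
- by move=> a b c _ IH1 _ IH2; apply: gc_trans IH2.
- by move=> a b c _ IH; apply: gc_add.
Qed.

Lemma phi_eq0 (x : vec) : (forall i, 0 < r i) -> phi r x = 0 -> x = vzero.
Proof.
move=> Hp H; apply/ffunP => i; rewrite ffunE.
have := phi_ge x i; rewrite H leqn0 muln_eq0 => /orP[/eqP //|].
by rewrite eqn0Ngt Hp.
Qed.

Section Final.
Variable S : pred nat.
Hypothesis Hgen : generates S r predT.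

Lemma Sphi (a : vec) : S (phi r a).
Proof. by apply/Hgen; exists a. Qed.

Lemma gen_drop i (x : vec) : x i = 0 -> phi r x = r i -> generates S r (predC1 i).
Proof.
move=> Hxi Hx n; split.
  case/Hgen => a [_ ->].
  exists (vadd (restr (~: [set i]) a) (vscale (a i) x)); split.
    move=> j; rewrite /= negbK => /eqP ->; by rewrite !ffunE !inE eqxx Hxi muln0.
  rewrite phiD phiZ Hx (phi_split [set i] a) addnC; congr (_ + _).
  by rewrite phi_restr big_set1.
by case=> a [_ ->]; apply: Sphi.
Qed.
End Final.

Definition vmin (a b : vec) : vec := [ffun j => minn (a j) (b j)].
Definition nrm (p : vec * vec) : vec * vec :=
  ([ffun j => p.1 j - vmin p.1 p.2 j], [ffun j => p.2 j - vmin p.1 p.2 j]).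

Lemma nrm_add1 p : p.1 = vadd (nrm p).1 (vmin p.1 p.2).
Proof. by apply/ffunP => j; rewrite !ffunE subnK // geq_minl. Qed.

Lemma nrm_add2 p : p.2 = vadd (nrm p).2 (vmin p.1 p.2).
Proof. by apply/ffunP => j; rewrite !ffunE subnK // geq_minr. Qed.

Lemma nrm_disj p j : (nrm p).1 j = 0 \/ (nrm p).2 j = 0.
Proof.
rewrite !ffunE /minn; case: ltnP => H; first by left; rewrite subnn.
by right; rewrite subnn.
Qed.

Lemma final_nat (S : pred nat) (F : nat) :
  numerical_semigroup S -> (exists n, ~~ S n) -> minimal_generating_system S r ->
  complete_intersection r -> frobenius S F -> 0 < k /\ 2 ^ k.-1 <= F.+1.
Proof.
move=> [HS0 HSadd [N HN]] [n0 Hn0] [Hinj [Hgen Hminl]] [rho [[Huniq [Hpres _]] Hsize]] [HF HFgt].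
have Hpos : forall i, 0 < r i.
  move=> i; rewrite lt0n; apply/negP => /eqP Hri.
  have Hz : (vzero : vec) i = 0 by rewrite ffunE.
  have Hz2 : phi r vzero = r i by rewrite phi0 Hri.
  by have := Hminl _ (gen_drop Hgen Hz Hz2) i; rewrite /= eqxx.
have Hirr : IRR setT.
  move=> i _; split => // x Hx Hxi.
  have Hx0 : x i = 0 by apply: Hx; rewrite !inE eqxx.
  by have := Hminl _ (gen_drop Hgen Hx0 Hxi) i; rewrite /= eqxx.
have Hk : 0 < k.
  rewrite lt0n; apply/negP => /eqP Hk0.
  have : S N.+1 by apply: HN; exact: leqnSn.
  case/Hgen => a [_ Ha].
  have H0 : phi r a = 0.
    by rewrite /phi big1 // => -[j Hj] _; exfalso; have := Hj; rewrite Hk0.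
  by rewrite H0 in Ha.
have Hphi_rho : forall p, p \in rho -> phi r p.1 = phi r p.2.
  by move=> [a b] Hp; apply/(Hpres a b); apply: gc_base.
set rho' := [seq nrm p | p <- rho & p.1 != p.2].
have Hwf' : forall p, p \in rho' -> wfpair setT p.
  move=> p' /mapP[p]; rewrite mem_filter => /andP[Hne Hp] ->.
  have E1 := nrm_add1 p; have E2 := nrm_add2 p.
  have Heq : phi r (nrm p).1 = phi r (nrm p).2.
    by apply/(@addIn (phi r (vmin p.1 p.2))); rewrite -!phiD -E1 -E2 Hphi_rho.
  set c := vmin p.1 p.2 in E1 E2 Heq *.
  have Hboth : (nrm p).1 = vzero -> (nrm p).2 = vzero -> False.
    by move=> H1 H2; move: Hne; rewrite E1 E2 H1 H2 eqxx.
  split.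
  - by split => i; rewrite inE.
  - apply/negP => /eqP H1; apply: (Hboth H1); apply: phi_eq0 => //; by rewrite -Heq H1 phi0.
  - apply/negP => /eqP H2; apply: (Hboth^~ H2); apply: phi_eq0 => //; by rewrite Heq H2 phi0.
  - exact: Heq.
  - exact: nrm_disj.
have Hcomp' : complete setT rho'.
  move=> x y _ _ Hxy; have := (Hpres x y).2 Hxy.
  apply: gen_cong_sub2 => a b Hab.
  case: (eqVneq a b) => [->|Hne]; first exact: gc_refl.
  have Hin : ((nrm (a, b)).1, (nrm (a, b)).2) \in rho'.
    by apply/mapP; exists (a, b) => //; rewrite mem_filter Hne.
  have := gc_add (vmin a b) (@gc_base k (fun a b : vec => is_true ((a, b) \in rho')) _ _ Hin).
  have E1 : vadd (nrm (a, b)).1 (vmin a b) = a := esym (nrm_add1 (a, b)).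
  have E2 : vadd (nrm (a, b)).2 (vmin a b) = b := esym (nrm_add2 (a, b)).
  by rewrite E1 E2.
have Hsz' : size rho' <= k.-1 by rewrite size_map -subn1 -Hsize size_filter count_size.
have HcardT : #|[set: 'I_k]| = k.-1.+1 by rewrite cardsT card_ord prednK.
have HM := MAIN (leqnn k.-1) HcardT Hirr Hwf' Hcomp' Hsz'.
have Hg1 : gcdP [set: 'I_k] = 1.
  have : S N by apply: HN.
  case/Hgen => a [_ Ha].
  have : S N.+1 by apply: HN.
  case/Hgen => b [_ Hb].
  have Hva (v : vec) : vsupp [set: 'I_k] v by move=> i; rewrite inE.
  have H1 := gcdP_dvd (Hva a); have H2 := gcdP_dvd (Hva b).
  rewrite -Ha in H1; rewrite -Hb -addn1 in H2.
  by move: H2; rewrite (dvdn_addr _ H1) dvdn1 => /eqP.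
have Hr : forall i, 2 ^ k.-1 <= r i by move=> i; have := HM i; rewrite Hg1 muln1 inE; apply.
have Hex : exists n, 0 < n /\ S n by exists N.+1; split => //; apply: HN.
have Hexb : exists n, (fun n => (0 < n) && S n) n by case: Hex => n [H1 H2]; exists n; rewrite H1.
case: (ex_minnP Hexb) => m0 /andP[Hm0 HSm0] Hmin0.
have Hm0k : 2 ^ k.-1 <= m0.
  case/Hgen: HSm0 => a [_ Ha].
  have Hanz : a != vzero by apply/negP => /eqP Ha0; move: Hm0; rewrite Ha Ha0 phi0.
  case/vnz: Hanz => j Hj.
  apply: leq_trans (Hr j) _; rewrite Ha; apply: leq_trans (phi_ge a j).
  by rewrite leq_pmull // lt0n.
split => //.
case: (leqP m0 1) => Hm1; first by apply: leq_trans Hm0k (leq_trans Hm1 _).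
have HnS : ~~ S m0.-1.
  apply/negP => HS.
  have Hp1 : 0 < m0.-1 by rewrite -ltnS prednK // ltnW.
  have := Hmin0 m0.-1; rewrite Hp1 HS => /(_ isT).
  by rewrite leqNgt ltn_predL Hm0.
have HmF : m0.-1 <= F.
  by rewrite leqNgt; apply/negP => /HFgt HS; move/negP: HnS; apply.
apply: leq_trans Hm0k _; by rewrite -ltnS prednK // ltnW in HmF.
Qed.
End Frame.

From Stdlib Require Import Reals Lra.

Lemma expn2_INR (K : nat) : INR (expn 2 K) = (2 ^ K)%R.
Proof.
elim: K => [//|K IH]; rewrite expnS -multE mult_INR IH /=.
by [].
Qed.

Theorem corollary2p7 (S : pred nat) (k : nat) (r : 'I_k -> nat) (F : nat) :
  numerical_semigroup S ->
  (exists n, ~~ S n) ->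
  minimal_generating_system S r ->
  complete_intersection r ->
  frobenius S F ->
  (INR k <= ln (INR (F + 1)) / ln 2 + 1)%R.
Proof.
move=> H1 H2 H3 H4 H5.
have [Hk Hp] := final_nat H1 H2 H3 H4 H5.
set K := k.-1 in Hp.
have Ek : k = K.+1 by rewrite prednK.
have HP2 : (2 ^ K <= INR (F + 1))%R.
  rewrite -expn2_INR; apply: le_INR; apply/leP; apply: (leq_trans Hp); lia.
have Hln2 : (0 < ln 2)%R.
  rewrite -ln_1; apply: ln_increasing; lra.
have H2K : (0 < 2 ^ K)%R by apply: pow_lt; lra.
have Hle : (ln (2 ^ K) <= ln (INR (F + 1)))%R.
  case: (Rle_lt_or_eq_dec _ _ HP2) => [Hlt|->]; last by apply: Rle_refl.
  by apply: Rlt_le; apply: ln_increasing.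
rewrite ln_pow in Hle; last by lra.
rewrite Ek S_INR; apply: Rplus_le_compat_r.
apply: (Rmult_le_reg_r (ln 2)) => //.
have -> : (ln (INR (F + 1)) / ln 2 * ln 2 = ln (INR (F + 1)))%R.
  by field; apply: Rgt_not_eq.
exact: Hle.
Qed.
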